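(* In $\mathcal H_{P,R}$ and $\mathcal H_{Fr}$, for every $n\ge1$: $$\tilde\Delta(v_n)=\sum_{k=1}^{n-1}\sum_{l>0}\binom{2n-2k+l-2}{l}\Big(\sum_{\substack{a_1+\cdots+a_l=k\\ a_i>0}}v_{a_1}\cdots v_{a_l}\Big)\otimes v_{n-k},$$ $$\tilde\Delta_{Fr}(v_n)=\sum_{k=1}^{n-1}\sum_{l>0}\binom{n-k+l-2}{l}\Big(\sum_{\substack{a_1+\cdots+a_l=k\\ a_i>0}}v_{a_1}\cdots v_{a_l}\Big)\otimes v_{n-k},$$ $$\tilde\Delta(u_n)=\sum_{k=1}^{n-1}\sum_{l>0}\binom{2n-2k+l}{l}\Big(\sum_{\substack{a_1+\cdots+a_l=k\\ a_i>0}}v_{a_1}\cdots v_{a_l}\Big)\otimes u_{n-k},$$ $$\tilde\Delta_{Fr}(u_n)=\sum_{k=1}^{n-1}\sum_{l>0}\binom{n-k+l}{l}\Big(\sum_{\substack{a_1+\cdots+a_l=k\\ a_i>0}}v_{a_1}\cdots v_{a_l}\Big)\otimes u_{n-k}.$$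
   Context: Planar rooted trees are finite trees with a root, embedded in the plane, edges oriented away from the root (undecorated). $\mathcal H_{P,R}$ is the free associative unital $\mathbb Q$-algebra on planar rooted trees; its basis is the set of planar forests $t_1\cdots t_n$ ($1$ = empty forest), and the weight of a forest is its number of vertices. Its coproduct is $\Delta(F)=\sum_cP^c(F)\otimes R^c(F)$ over tuples $c=(c_i)$ where each $c_i$ is the empty cut of $t_i$ ($P=1,R=t_i$), the total cut ($P=t_i,R=1$), or an admissible cut of $t_i$ (a nonempty set of edges such that every oriented path meets at most one of them; $R^{c_i}(t_i)$ is the component of the root, $P^{c_i}(t_i)$ the left-to-right planar forest of the other components), $P^c(F)=\prod P^{c_i}(t_i)$, $R^c(F)=\prod R^{c_i}(t_i)$. $\mathcal H_{Fr}$ is the same algebra with coproduct $\Delta_{Fr}(F)=\sum_cP^c(F)\otimes R^c(F)$ where each $c_i$ is the empty cut, the total cut, or an admissible cut of $t_i$ containing no left edge (an edge is left if it is the leftmost among the edges with the same origin). For a coproduct $\delta$, $\tilde\delta(x)=\delta(x)-x\otimes1-1\otimes x$. For $n\ge1$, $u_n$ is the sum of all planar forests of weight $n$ and $v_n$ the sum of all planar rooted trees of weight $n$. *)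

(* Defs.v *)
From HB Require Import structures.
From mathcomp Require Import all_boot all_order all_algebra.
Set Implicit Arguments. Unset Strict Implicit. Unset Printing Implicit Defensive.
Import GRing.Theory Num.Theory.
Local Open Scope ring_scope.

Inductive tree := Node of seq tree.

Fixpoint encode (t : tree) : GenTree.tree nat :=
  match t with Node f => GenTree.Node 0 (map encode f) end.
Fixpoint decode (g : GenTree.tree nat) : tree :=
  match g with
  | GenTree.Leaf _ => Node [::]
  | GenTree.Node _ l => Node (map decode l)
  end.
Fixpoint codeK (t : tree) : decode (encode t) = t :=
  match t return decode (encode t) = t with
  | Node f => f_equal Node
      ((fix aux (f : seq tree) : map decode (map encode f) = f :=
          match f return map decode (map encode f) = f with
          | [::] => erefl
          | a :: f' => f_equal2 cons (codeK a) (aux f')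
          end) f)
  end.
HB.instance Definition _ := Countable.copy tree (can_type codeK).

(** Planar forests (the basis of H): words of trees; [::] is the empty forest 1. *)
Definition forest := seq tree.

Fixpoint tweight (t : tree) : nat :=
  match t with Node f => (sumn (map tweight f)).+1 end.
Definition fweight (F : forest) : nat := sumn (map tweight F).

(** Enumeration of all planar forests of weight n (fuel-based recursion;
    first tree has k.+1 vertices, its children forest has weight k). *)
Fixpoint forests_fuel (fuel n : nat) : seq forest :=
  match n with
  | 0 => [:: [::]]
  | _ => match fuel with
         | 0 => [::]
         | fuel'.+1 =>
           flatten [seq [seq Node f :: g | f <- forests_fuel fuel' k,
                                            g <- forests_fuel fuel' (n - k.+1)]
                   | k <- iota 0 n]
         end
  end.
Definition forests_of (n : nat) : seq forest := forests_fuel n n.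
Definition trees_of (n : nat) : seq tree :=
  match n with 0 => [::] | m.+1 => [seq Node f | f <- forests_of m] end.

(** Elements of H: finite formal Q-linear combinations of forests. *)
Definition hsum := seq (rat * forest).
(** Elements of H (x) H: finite formal combinations of pairs of forests. *)
Definition tsum := seq (rat * forest * forest).

Definition hone : hsum := [:: (1, [::])].
Definition hmul (x y : hsum) : hsum :=
  [seq (a.1 * b.1, a.2 ++ b.2) | a <- x, b <- y].
Definition hprod (xs : seq hsum) : hsum := foldr hmul hone xs.

Definition tens (x y : hsum) : tsum :=
  [seq (a.1 * b.1, a.2, b.2) | a <- x, b <- y].
Definition tscale (c : rat) (s : tsum) : tsum :=
  [seq (c * e.1.1, e.1.2, e.2) | e <- s].
Definition topp (s : tsum) : tsum := tscale (-1) s.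
Definition tcoef (s : tsum) (P R : forest) : rat :=
  \sum_(e <- s | (e.1.2 == P) && (e.2 == R)) e.1.1.
Definition teq (s1 s2 : tsum) : Prop := forall P R, tcoef s1 P R = tcoef s2 P R.

Fixpoint prod_choices (ls : seq (seq (forest * forest))) : seq (forest * forest) :=
  match ls with
  | [::] => [:: ([::], [::])]
  | l :: ls' => [seq (p.1 ++ q.1, p.2 ++ q.2) | p <- l, q <- prod_choices ls']
  end.

(** Empty or admissible cuts of a tree, as the list (with multiplicity) of pairs
    (P^c(t), R^c(t)).  For each edge from the root to a child c: either the edge
    is cut (c goes entirely into P, nothing below may be cut), or it is not and a
    cut of c is chosen recursively. *)
Fixpoint cutsPR (t : tree) : seq (forest * tree) :=
  match t with
  | Node f =>
    [seq (p.1, Node p.2) |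
       p <- prod_choices
              (map (fun c => ([:: c], [::]) ::
                              [seq (q.1, [:: q.2]) | q <- cutsPR c]) f)]
  end.

(** Same, but left edges (edge to the first child) may not be cut. *)
Fixpoint cutsFr (t : tree) : seq (forest * tree) :=
  match t with
  | Node [::] => [:: ([::], Node [::])]
  | Node (c0 :: f) =>
    [seq (p.1, Node p.2) |
       p <- prod_choices
              ([seq (q.1, [:: q.2]) | q <- cutsFr c0] ::
               map (fun c => ([:: c], [::]) ::
                              [seq (q.1, [:: q.2]) | q <- cutsFr c]) f)]
  end.

(** For a tree: the total cut (t, 1) together with the empty/admissible cuts. *)
Definition tree_opts (cuts : tree -> seq (forest * tree)) (t : tree)
  : seq (forest * forest) :=
  ([:: t], [::]) :: [seq (q.1, [:: q.2]) | q <- cuts t].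

Definition delta_forest (cuts : tree -> seq (forest * tree)) (F : forest)
  : seq (forest * forest) :=
  prod_choices (map (tree_opts cuts) F).

Definition delta (cuts : tree -> seq (forest * tree)) (x : hsum) : tsum :=
  flatten [seq [seq (a.1, p.1, p.2) | p <- delta_forest cuts a.2] | a <- x].
Definition rdelta (cuts : tree -> seq (forest * tree)) (x : hsum) : tsum :=
  delta cuts x ++ topp (tens x hone) ++ topp (tens hone x).

Definition vv (n : nat) : hsum := [seq (1, [:: t]) | t <- trees_of n].
Definition uu (n : nat) : hsum := [seq (1, F) | F <- forests_of n].

Fixpoint comps (k l : nat) : seq (seq nat) :=
  match l with
  | 0 => if k == 0 then [:: [::]] else [::]
  | l'.+1 => flatten [seq [seq a :: c | c <- comps (k - a) l'] | a <- iota 1 k]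
  end.

Definition comp_sum (k l : nat) : hsum :=
  flatten [seq hprod (map vv a) | a <- comps k l].

(** sum_{k=1}^{n-1} sum_{l>0} c(n,k,l) (comp_sum k l) (x) w_{n-k};
    terms with l > k vanish (no compositions), so l ranges over 1..k. *)
Definition rhs (c : nat -> nat -> nat -> nat) (w : nat -> hsum) (n : nat) : tsum :=
  flatten [seq flatten [seq tscale (c n k l)%:R (tens (comp_sum k l) (w (n - k)%N))
                       | l <- iota 1 k]
          | k <- iota 1 (n - 1)%N].

(* Main.v *)
Require Import Defs.
From mathcomp Require Import all_boot all_algebra zify ring.
Set Implicit Arguments. Unset Strict Implicit. Unset Printing Implicit Defensive.


Definition cnt {T : eqType} (L : seq T) (x : T) : nat := \sum_(p <- L) (p == x).

Lemma cnt_cat (T : eqType) (L1 L2 : seq T) x : cnt (L1 ++ L2) x = cnt L1 x + cnt L2 x.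
Proof. by rewrite /cnt big_cat. Qed.

Lemma cnt_flatten (T : eqType) (L : seq (seq T)) x :
  cnt (flatten L) x = \sum_(l <- L) cnt l x.
Proof. by rewrite /cnt big_flatten. Qed.

Lemma cnt_flatten_map (I : Type) (T : eqType) (f : I -> seq T) (s : seq I) x :
  cnt (flatten (map f s)) x = \sum_(a <- s) cnt (f a) x.
Proof. by rewrite cnt_flatten big_map. Qed.

Lemma cnt_map_inj (T U : eqType) (f : T -> U) (L : seq T) x :
  injective f -> cnt (map f L) (f x) = cnt L x.
Proof. by move=> fi; rewrite /cnt big_map; apply: eq_bigr => p _; rewrite inj_eq. Qed.

Lemma cat_eqE (T : eqType) (x y P : seq T) :
  ((x ++ y == P) : nat) = \sum_(i < (size P).+1) ((x == take i P) && (y == drop i P)).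
Proof.
case: (eqVneq (x ++ y) P) => [<-|ne].
  have hi : size x < (size (x ++ y)).+1 by rewrite size_cat ltnS leq_addr.
  rewrite (bigD1 (Ordinal hi)) //= take_size_cat // drop_size_cat // !eqxx big1 //.
  move=> i /eqP ni; apply/eqP; rewrite eqb0; apply/negP => /andP [/eqP hx _].
  apply: ni; apply: val_inj => /=.
  have hs : size x = size (take i (x ++ y)) by rewrite -hx.
  rewrite hs size_take; have := ltn_ord i; rewrite ltnS leq_eqVlt.
  by case/orP => [/eqP ->|->]; rewrite ?ltnn.
rewrite big1 // => i _; apply/eqP; rewrite eqb0; apply/negP => /andP [/eqP hx /eqP hy].
by move: ne; rewrite hx hy cat_take_drop eqxx.
Qed.

Lemma cnt_allpairs (T : eqType) (L1 L2 : seq (seq T * seq T)) P R :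
  cnt [seq (p.1 ++ q.1, p.2 ++ q.2) | p <- L1, q <- L2] (P, R) =
  \sum_(i < (size P).+1) \sum_(j < (size R).+1)
     cnt L1 (take i P, take j R) * cnt L2 (drop i P, drop j R).
Proof.
rewrite cnt_flatten_map.
under eq_bigr => p _ do rewrite /cnt big_map.
have E : forall p q, (((p.1 ++ q.1, p.2 ++ q.2) == (P, R)) : nat) =
  \sum_(i < (size P).+1) \sum_(j < (size R).+1)
     ((p == (take i P, take j R)) * (q == (drop i P, drop j R))).
  move=> [p1 p2] [q1 q2] /=.
  rewrite xpair_eqE -mulnb cat_eqE cat_eqE big_distrl /=; apply: eq_bigr => i _.
  rewrite big_distrr /=; apply: eq_bigr => j _.
  rewrite !xpair_eqE !mulnb; by case: (p1 == _); case: (p2 == _); case: (q1 == _); case: (q2 == _).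
under eq_bigr => p _ do under eq_bigr => q _ do rewrite E.
rewrite /cnt.
under [RHS]eq_bigr => i _ do under eq_bigr => j _ do rewrite big_distrl /=.
under [RHS]eq_bigr => i _ do under eq_bigr => j _ do under eq_bigr => p _ do rewrite big_distrr /=.
under [RHS]eq_bigr => i _ do rewrite exchange_big /=.
rewrite [RHS]exchange_big /=; apply: eq_bigr => p _.
under [RHS]eq_bigr => i _ do rewrite exchange_big /=.
by rewrite [RHS]exchange_big.
Qed.



Lemma ff_unfold fuel n : forests_fuel fuel.+1 n.+1 =
  flatten [seq [seq Node f :: g | f <- forests_fuel fuel k, g <- forests_fuel fuel (n.+1 - k.+1)] | k <- iota 0 n.+1].
Proof. by []. Qed.

Lemma ff_step fuel n : n <= fuel -> forests_fuel fuel.+1 n = forests_fuel fuel n.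
Proof.
elim: fuel n => [|fuel IH] [|n] // hn.
rewrite ff_unfold [RHS]ff_unfold.
congr flatten; apply/eq_in_map => k; rewrite mem_iota add0n => /andP [_ hk].
rewrite (IH k) ?(IH (n.+1 - k.+1)) //; lia.
Qed.

Lemma ff_of fuel n : n <= fuel -> forests_fuel fuel n = forests_of n.
Proof.
move=> h; rewrite /forests_of -(subnKC h); elim: (fuel - n) => [|d IH]; first by rewrite addn0.
by rewrite addnS ff_step ?leq_addr.
Qed.

Lemma forests_S n : forests_of n.+1 =
  flatten [seq [seq Node f :: g | f <- forests_of k, g <- forests_of (n - k)] | k <- iota 0 n.+1].
Proof.
rewrite {1}/forests_of ff_unfold; congr flatten; apply/eq_in_map => k; rewrite mem_iota add0n => /andP [_ hk].
rewrite subSS (@ff_of n k) ?(@ff_of n (n - k)) ?leq_subr //; lia.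
Qed.

Lemma Node_inj : injective Node. Proof. by move=> x y [->]. Qed.

Lemma tweight_gt0 t : 0 < tweight t. Proof. by case: t. Qed.

Lemma fweight_cons t F : fweight (t :: F) = tweight t + fweight F. Proof. by []. Qed.
Lemma fweight_cat F G : fweight (F ++ G) = fweight F + fweight G.
Proof. by rewrite /fweight map_cat sumn_cat. Qed.
Lemma tweight_Node f : tweight (Node f) = (fweight f).+1. Proof. by []. Qed.

Lemma fweight0 F : (fweight F == 0) = (F == [::]).
Proof. case: F => [|t F] //=; rewrite fweight_cons; by have := tweight_gt0 t; case: tweight. Qed.

Lemma size_le_fweight F : size F <= fweight F.
Proof. elim: F => [|t F IH] //=; rewrite fweight_cons; have := tweight_gt0 t; case: tweight => //= k _.
by rewrite addSn ltnS (leq_trans IH) // leq_addl. Qed.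

Lemma sum_pick n (a : nat) (c : nat -> nat) :
  \sum_(k < n) (a == k) * c k = (a < n) * c a.
Proof.
elim: n => [|n IH]; first by rewrite big_ord0.
rewrite big_ord_recr /= IH; case: (eqVneq a n) => [->|ne].
  by rewrite ltnn leqnn.
by rewrite /= addn0 [a < n.+1]ltnS [a <= n]leq_eqVlt (negbTE ne).
Qed.

Lemma sum_pick_seq m n (a : nat) (c : nat -> nat) :
  \sum_(k <- iota m n) (a == k) * c k = ((m <= a) && (a < m + n)) * c a.
Proof.
elim: n m => [|n IH] m; first by rewrite big_nil addn0; case: leqP => h //; rewrite ltnNge h.
rewrite /= big_cons IH addSnnS; case: (eqVneq a m) => [->|ne].
  have -> : m < m + n.+1 by lia.
  by rewrite ltnn leqnn /= addn0 mul1n.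
by rewrite /= add0n [m < a]ltn_neqAle eq_sym ne.
Qed.

Lemma sum_conv n a b c : 0 < a ->
  \sum_(k < n.+1) (a == k.+1) * ((b == n - k) * c) = (a + b == n.+1) * c.
Proof.
case: a => // a _.
under eq_bigr => k _ do rewrite eqSS.
rewrite (sum_pick n.+1 a (fun k => (b == n - k) * c)) mulnA mulnb addSn eqSS.
have -> : ((a < n.+1) && (b == n - a)) = (a + b == n); last by [].
apply/idP/idP.
  by case/andP => ha /eqP ->; rewrite subnKC // -ltnS.
move/eqP => <-; by rewrite ltnS leq_addr addKn eqxx.
Qed.

Lemma cnt_forests n F : cnt (forests_of n) F = (fweight F == n).
Proof.
elim/ltn_ind: n F => [[|n]] IH F.
  rewrite /cnt /forests_of /= big_cons big_nil addn0 fweight0 eq_sym; by [].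
rewrite forests_S cnt_flatten_map.
case: F => [|[h] G].
  rewrite big1 // => k _; rewrite cnt_flatten_map big1 // => f _; rewrite /cnt big_map big1 //.
have E : forall k, k < n.+1 -> cnt [seq Node f :: g | f <- forests_of k, g <- forests_of (n - k)] (Node h :: G)
   = (fweight h == k) * (fweight G == n - k).
  move=> k hk; have IH1 := IH k hk; have IH2 := IH (n - k) (leq_ltn_trans (leq_subr k n) (ltnSn n)).
  rewrite cnt_flatten_map -IH1 -IH2.
  rewrite /cnt big_distrl /=; apply: eq_bigr => f _; rewrite big_map big_distrr /=; apply: eq_bigr => g _.
  by rewrite eqseq_cons (inj_eq Node_inj) mulnb.
rewrite (eq_big_seq (fun k => (fweight h == k) * (fweight G == n - k))); last first.
  by move=> k; rewrite mem_iota add0n => /andP [_ hk]; rewrite E.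
rewrite sum_pick_seq /= fweight_cons tweight_Node add0n ltnS addSn eqSS.
rewrite mulnb; congr nat_of_bool; apply/idP/idP; [case/andP => h1 /eqP ->; rewrite subnKC //| move/eqP => <-; rewrite leq_addr addKn eqxx //].
Qed.



Lemma cnt_trees m t : cnt (trees_of m) t = (tweight t == m).
Proof.
case: m => [|m]; first by rewrite /cnt big_nil; have := tweight_gt0 t; case: tweight.
case: t => h; rewrite /trees_of -/(forests_of m) cnt_map_inj ?cnt_forests //; exact: Node_inj.
Qed.

Definition M (s l : nat) : nat := if s is s'.+1 then 'C(s' + l, l) else (l == 0 : nat).
Arguments M : simpl never.

Lemma M_r0 s : M s 0 = 1. Proof. by case: s => // s; rewrite /M bin0. Qed.
Lemma M_1 l : M 1 l = 1. Proof. by rewrite /M add0n binn. Qed.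
Lemma M_pascal s l : M s.+1 l.+1 = M s.+1 l + M s l.+1.
Proof. case: s => [|s]; first by rewrite !M_1 /M addn0. rewrite /M addnS binS. by rewrite addnC addSnnS. Qed.

Lemma M_conv a b l : \sum_(i < l.+1) M a i * M b (l - i) = M (a + b) l.
Proof.
elim: a l => [|a IHa] l.
  rewrite big_ord_recl /= subn0 add0n mul1n big1 ?addn0 // => i _; by rewrite mul0n.
elim: l => [|l IHl]; first by rewrite big_ord1 !M_r0.
rewrite big_ord_recl /= M_r0 mul1n subn0.
under eq_bigr => i _ do rewrite /bump /= add1n subSS M_pascal mulnDl.
rewrite big_split /= IHl addnA [M b l.+1 + _]addnC -addnA.
have := IHa l.+1; rewrite big_ord_recl /= M_r0 mul1n subn0.
under eq_bigr => i _ do rewrite /bump /= add1n subSS.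
move=> ->. by rewrite addSn M_pascal.
Qed.



Section Gen.
Variable cuts : tree -> seq (forest * tree).

Definition Ef n (x : forest * forest) := cnt (flatten [seq delta_forest cuts F | F <- forests_of n]) x.
Definition Ct m (x : forest * tree) := cnt (flatten [seq cuts t | t <- trees_of m]) x.
Definition TO m (x : forest * forest) := cnt (flatten [seq tree_opts cuts t | t <- trees_of m]) x.

Lemma sum_forests_S (K : forest -> nat) n :
  \sum_(F <- forests_of n.+1) K F =
  \sum_(k < n.+1) \sum_(t <- trees_of k.+1) \sum_(g <- forests_of (n - k)) K (t :: g).
Proof.
rewrite forests_S big_flatten big_map -[iota 0 n.+1]/(index_iota 0 n.+1) big_mkord.
apply: eq_bigr => k _; rewrite big_flatten /= !big_map; apply: eq_bigr => f _; by rewrite big_map.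
Qed.

Lemma sum4 (T1 T2 : Type) (s1 : seq T1) (s2 : seq T2) p q
  (A : T1 -> nat -> nat -> nat) (B : T2 -> nat -> nat -> nat) :
  \sum_(t <- s1) \sum_(g <- s2) \sum_(i < p) \sum_(j < q) A t i j * B g i j =
  \sum_(i < p) \sum_(j < q) (\sum_(t <- s1) A t i j) * (\sum_(g <- s2) B g i j).
Proof.
under [RHS]eq_bigr => i _ do under eq_bigr => j _ do rewrite big_distrl /=.
under [RHS]eq_bigr => i _ do under eq_bigr => j _ do under eq_bigr => t _ do rewrite big_distrr /=.
under [RHS]eq_bigr => i _ do rewrite exchange_big /=.
rewrite [RHS]exchange_big /=; apply: eq_bigr => t _.
under [RHS]eq_bigr => i _ do rewrite exchange_big /=.
by rewrite [RHS]exchange_big.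
Qed.

Lemma E_S n P R : Ef n.+1 (P, R) =
  \sum_(k < n.+1) \sum_(i < (size P).+1) \sum_(j < (size R).+1)
     TO k.+1 (take i P, take j R) * Ef (n - k) (drop i P, drop j R).
Proof.
rewrite /Ef cnt_flatten_map sum_forests_S; apply: eq_bigr => k _.
under eq_bigr => t _ do under eq_bigr => g _ do rewrite cnt_allpairs.
rewrite (sum4 _ _ _ _ (fun t (i j : nat) => cnt (tree_opts cuts t) (take i P, take j R))
               (fun g (i j : nat) => cnt (delta_forest cuts g) (drop i P, drop j R))).
apply: eq_bigr => i _; apply: eq_bigr => j _.
by rewrite /TO !cnt_flatten_map.
Qed.

Lemma cnt_cons (T : eqType) (a : T) L x : cnt (a :: L) x = (a == x) + cnt L x.
Proof. by rewrite /cnt big_cons. Qed.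

Lemma consnil (T : eqType) (x : T) s : (x :: s == [::]) = false. Proof. by apply/eqP. Qed.
Lemma nilcons (T : eqType) (x : T) s : ([::] == x :: s) = false. Proof. by apply/eqP. Qed.

Lemma liftq_inj : injective (fun q : forest * tree => (q.1, [:: q.2])).
Proof. by move=> [a b] [c d] /= [-> ->]. Qed.

Lemma TO_eq m X U : TO m (X, U) =
  (if X is [:: t] then (U == [::]) * (tweight t == m) else 0) +
  (if U is [:: u] then Ct m (X, u) else 0).
Proof.
rewrite /TO cnt_flatten_map.
under eq_bigr => t _ do rewrite /tree_opts cnt_cons.
rewrite big_split /=; congr (_ + _).
  case: X => [|t [|t' X]].
  - by rewrite big1 // => t0 _; rewrite xpair_eqE.
  - rewrite -cnt_trees /cnt big_distrr /=; apply: eq_bigr => t0 _.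
    rewrite xpair_eqE eqseq_cons andbT [U == _]eq_sym mulnb andbC; by [].
  - by rewrite big1 // => t0 _; rewrite xpair_eqE eqseq_cons nilcons andbF /=.
case: U => [|u [|u' U]].
- rewrite big1 // => t0 _; rewrite /cnt big_map big1 // => q _; by rewrite xpair_eqE consnil andbF.
- rewrite /Ct cnt_flatten_map; apply: eq_bigr => t _; exact: (cnt_map_inj _ (X, u) liftq_inj).
- rewrite big1 // => t0 _; rewrite /cnt big_map big1 // => q _; by rewrite xpair_eqE eqseq_cons nilcons !andbF.
Qed.

Lemma TO_single m X u : TO m (X, [:: u]) = Ct m (X, u).
Proof. by rewrite TO_eq; case: X => [|t [|t' X]]. Qed.
Lemma TO_big m X u u' U : TO m (X, u :: u' :: U) = 0.
Proof. by rewrite TO_eq; case: X => [|t [|t' X]]. Qed.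
Lemma TO_nil m X : TO m (X, [::]) = if X is [:: t] then (tweight t == m) : nat else 0.
Proof. by rewrite TO_eq addn0; case: X => [|t [|t' X]] //; rewrite mul1n. Qed.

Lemma bump0 i : bump 0 i = i.+1. Proof. by []. Qed.

Lemma sumj k m X Y R :
  \sum_(j < (size R).+1) TO k (X, take j R) * Ef m (Y, drop j R) =
  TO k (X, [::]) * Ef m (Y, R) + (if R is r :: R' then Ct k (X, r) * Ef m (Y, R') else 0).
Proof.
case: R => [|r R']; first by rewrite big_ord1 take0 drop0 addn0.
rewrite big_ord_recl take0 drop0 /=; congr (_ + _).
rewrite big_ord_recl /= add0n take0 drop0 TO_single big1 ?addn0 // => j _.
case: R' j => [|r' R''] j; first by case: j.
by rewrite add0n bump0 /= TO_big.
Qed.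

Lemma sumi k m P R :
  \sum_(i < (size P).+1) TO k (take i P, [::]) * Ef m (drop i P, R) =
  if P is t :: P' then (tweight t == k) * Ef m (P', R) else 0.
Proof.
case: P => [|t P']; first by rewrite big_ord1 take0 TO_nil.
rewrite big_ord_recl take0 TO_nil mul0n add0n.
rewrite big_ord_recl /= add0n take0 drop0 TO_nil big1 ?addn0 // => j _.
case: P' j => [|r' R''] j; first by case: j.
by rewrite add0n bump0 /= TO_nil.
Qed.

Lemma E_step n (F G : nat -> nat -> nat)
  (HE : forall m, m <= n -> forall P R,
        Ef m (P, R) = (fweight P + fweight R == m) * F (size P) (fweight R))
  (HC : forall m, m <= n -> forall P r,
        Ct m.+1 (P, r) = (fweight P + tweight r == m.+1) * G (size P) (tweight r))
  P R : Ef n.+1 (P, R) = (fweight P + fweight R == n.+1) *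
   ((if P is _ :: _ then F (size P).-1 (fweight R) else 0) +
    (if R is r :: R' then \sum_(i < (size P).+1) G i (tweight r) * F (size P - i) (fweight R')
     else 0)).
Proof.
rewrite E_S.
under eq_bigr => k _ do (under eq_bigr => i _ do rewrite sumj).
under eq_bigr => k _ do rewrite big_split sumi.
rewrite big_split mulnDr; congr (_ + _).
  case: P => [|t P']; first by rewrite big1 ?muln0.
  have H1 : forall k : 'I_n.+1, (tweight t == k.+1) * Ef (n - k) (P', R) =
     (tweight t == k.+1) * ((fweight P' + fweight R == n - k) * F (size P') (fweight R)).
    by move=> k; rewrite HE // leq_subr.
  rewrite (eq_bigr _ (fun k _ => H1 k)) sum_conv ?tweight_gt0 //.
  by rewrite fweight_cons addnA.
case: R => [|r R']; first by rewrite big1 ?muln0 // => k _; rewrite big1.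
rewrite exchange_big big_distrr; apply: eq_bigr => i _.
have hi : i <= size P by rewrite -ltnS ltn_ord.
have H2 : forall k : 'I_n.+1, Ct k.+1 (take i P, r) * Ef (n - k) (drop i P, R') =
   (fweight (take i P) + tweight r == k.+1) * ((fweight (drop i P) + fweight R' == n - k) *
     (G i (tweight r) * F (size P - i) (fweight R'))).
  move=> k; rewrite HC; last by rewrite -ltnS ltn_ord.
  rewrite HE ?leq_subr // size_takel // size_drop.
  by rewrite -mulnA; congr (_ * _); exact: mulnCA.
rewrite (eq_bigr _ (fun k _ => H2 k)) sum_conv; last by rewrite addn_gt0 tweight_gt0 orbT.
have -> : fweight (take i P) + tweight r + (fweight (drop i P) + fweight R') = fweight P + fweight (r :: R').
  have := fweight_cat (take i P) (drop i P); rewrite cat_take_drop fweight_cons; lia.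
by [].
Qed.


End Gen.



Lemma trees_S m : trees_of m.+1 = [seq Node f | f <- forests_of m]. Proof. by []. Qed.
Lemma forests_0 : forests_of 0 = [:: [::]]. Proof. by []. Qed.

Lemma E0 cuts P R : Ef cuts 0 (P, R) = ((P, R) == ([::], [::])).
Proof.
rewrite /Ef forests_0 cnt_flatten_map big_cons big_nil addn0.
by rewrite (_ : delta_forest cuts [::] = [:: ([::], [::])]) // cnt_cons /cnt big_nil addn0 eq_sym.
Qed.

Lemma E0' cuts P R (f : nat -> nat) : f 0 = 1 -> Ef cuts 0 (P, R) = (fweight P + fweight R == 0) * f (size P).
Proof.
rewrite E0 xpair_eqE addn_eq0 !fweight0.
move=> f0; case: P => [|? ?]; case: R => [|? ?]; by rewrite ?eqxx ?consnil /= ?f0.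
Qed.

Lemma dPR f : cutsPR (Node f) = [seq (p.1, Node p.2) | p <- delta_forest cutsPR f].
Proof. by []. Qed.
Lemma dFr t f : cutsFr (Node (t :: f)) = [seq (p.1, Node p.2) | p <- [seq (p.1 ++ q.1, p.2 ++ q.2) | p <- [seq (q.1, [:: q.2]) | q <- cutsFr t], q <- delta_forest cutsFr f]].
Proof. by []. Qed.

Lemma node_inj2 : injective (fun p : forest * forest => (p.1, Node p.2)).
Proof. by move=> [a b] [c d] /= [-> ->]. Qed.

Lemma CtPR m P h : Ct cutsPR m.+1 (P, Node h) = Ef cutsPR m (P, h).
Proof.
rewrite /Ct /Ef trees_S cnt_flatten_map big_map cnt_flatten_map; apply: eq_bigr => f _.
by rewrite dPR (cnt_map_inj _ (P, h) node_inj2).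
Qed.

Lemma EPR_all N : forall m, m <= N -> forall P R,
  Ef cutsPR m (P, R) = (fweight P + fweight R == m) * M (fweight R).*2.+1 (size P).
Proof.
elim: N => [|N IH] m hm P R.
  by move: hm; rewrite leqn0 => /eqP ->; apply: E0'; rewrite M_r0.
case: (leqP m N) => hmN; first exact: IH.
have -> : m = N.+1 by lia.
rewrite (@E_step _ N (fun l w => M w.*2.+1 l) (fun l w => M w.*2.-1 l)) //; last first.
  move=> k hk Q [h]; rewrite CtPR IH // tweight_Node addnS eqSS doubleS.
  by [].
case: R => [|r R'].
  case: P => [|t P'] //; congr (_ * _); by rewrite addn0 /= !M_1.
congr (_ * _); rewrite M_conv.
have -> : (tweight r).*2.-1 + (fweight R').*2.+1 = (fweight (r :: R')).*2.
  by rewrite fweight_cons; have := tweight_gt0 r; lia.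
case: P => [|t P']; first by rewrite add0n !M_r0.
by rewrite /= M_pascal.
Qed.


Lemma CtPR_all m P r :
  Ct cutsPR m (P, r) = (fweight P + tweight r == m) * M (tweight r).*2.-1 (size P).
Proof.
case: m => [|m].
  rewrite /Ct /cnt big_nil; have := tweight_gt0 r; case: (tweight r) => // k _.
  by rewrite addnS.
case: r => h; rewrite CtPR (EPR_all (leqnn m)) tweight_Node addnS eqSS doubleS.
by [].
Qed.

Lemma conv cuts n (F G : nat -> nat -> nat)
  (HE : forall m, m <= n -> forall P R,
        Ef cuts m (P, R) = (fweight P + fweight R == m) * F (size P) (fweight R))
  (HC : forall m, m <= n -> forall P r,
        Ct cuts m.+1 (P, r) = (fweight P + tweight r == m.+1) * G (size P) (tweight r))
  P u V :
  \sum_(k < n.+1) \sum_(i < (size P).+1) Ct cuts k.+1 (take i P, u) * Ef cuts (n - k) (drop i P, V)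
  = (fweight P + fweight (u :: V) == n.+1) *
    \sum_(i < (size P).+1) G i (tweight u) * F (size P - i) (fweight V).
Proof.
rewrite exchange_big big_distrr; apply: eq_bigr => i _.
have hi : i <= size P by rewrite -ltnS ltn_ord.
have H2 : forall k : 'I_n.+1, Ct cuts k.+1 (take i P, u) * Ef cuts (n - k) (drop i P, V) =
   (fweight (take i P) + tweight u == k.+1) * ((fweight (drop i P) + fweight V == n - k) *
     (G i (tweight u) * F (size P - i) (fweight V))).
  move=> k; rewrite HC; last by rewrite -ltnS ltn_ord.
  rewrite HE ?leq_subr // size_takel // size_drop.
  by rewrite -mulnA; congr (_ * _); exact: mulnCA.
rewrite (eq_bigr _ (fun k _ => H2 k)) sum_conv; last by rewrite addn_gt0 tweight_gt0 orbT.
have -> : fweight (take i P) + tweight u + (fweight (drop i P) + fweight V) = fweight P + fweight (u :: V).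
  have := fweight_cat (take i P) (drop i P); rewrite cat_take_drop fweight_cons; lia.
by [].
Qed.

Definition Lf m (x : forest * forest) :=
  cnt (flatten [seq ([seq (q.1, [:: q.2]) | q <- cutsFr t] : seq (forest * forest)) | t <- trees_of m]) x.

Lemma Lf_eq m X U : Lf m (X, U) = if U is [:: u] then Ct cutsFr m (X, u) else 0.
Proof.
rewrite /Lf cnt_flatten_map.
case: U => [|u [|u' U]].
- rewrite big1 // => t0 _; rewrite /cnt big_map big1 // => q _; by rewrite xpair_eqE consnil andbF.
- rewrite /Ct cnt_flatten_map; apply: eq_bigr => t _; exact: (cnt_map_inj _ (X, u) liftq_inj).
- rewrite big1 // => t0 _; rewrite /cnt big_map big1 // => q _; by rewrite xpair_eqE eqseq_cons nilcons !andbF.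
Qed.

Lemma sumjL k m X Y h :
  \sum_(j < (size h).+1) Lf k (X, take j h) * Ef cutsFr m (Y, drop j h) =
  if h is u :: V then Ct cutsFr k (X, u) * Ef cutsFr m (Y, V) else 0.
Proof.
case: h => [|u V]; first by rewrite big_ord1 take0 Lf_eq.
rewrite big_ord_recl take0 Lf_eq add0n.
rewrite big_ord_recl /= add0n take0 drop0 Lf_eq big1 ?addn0 // => j _.
case: V j => [|r' R''] j; first by case: j.
by rewrite add0n bump0 /= Lf_eq.
Qed.

Lemma CtFr_S m P h : Ct cutsFr m.+2 (P, Node h) =
  \sum_(k < m.+1) \sum_(i < (size P).+1) \sum_(j < (size h).+1)
     Lf k.+1 (take i P, take j h) * Ef cutsFr (m - k) (drop i P, drop j h).
Proof.
rewrite /Ct trees_S cnt_flatten_map big_map sum_forests_S; apply: eq_bigr => k _.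
under eq_bigr => t _ do under eq_bigr => g _ do
  rewrite dFr (cnt_map_inj _ (P, h) node_inj2) cnt_allpairs.
rewrite (sum4 _ _ _ _ (fun t (i j : nat) => cnt [seq (q.1, [:: q.2]) | q <- cutsFr t] (take i P, take j h))
               (fun g (i j : nat) => cnt (delta_forest cutsFr g) (drop i P, drop j h))).
apply: eq_bigr => i _; apply: eq_bigr => j _.
by rewrite /Lf /Ef !cnt_flatten_map.
Qed.

Lemma CtFr_1 P h : Ct cutsFr 1 (P, Node h) = ((P, h) == ([::], [::])).
Proof.
rewrite /Ct trees_S forests_0 /=.
rewrite /cnt big_cons big_nil addn0.
by rewrite eq_sym !xpair_eqE (inj_eq Node_inj).
Qed.

Lemma Fr_all N :
 (forall m, m <= N -> forall P R,
    Ef cutsFr m (P, R) = (fweight P + fweight R == m) * M (fweight R).+1 (size P)) /\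
 (forall m, m <= N -> forall P r,
    Ct cutsFr m.+1 (P, r) = (fweight P + tweight r == m.+1) * M (tweight r).-1 (size P)).
Proof.
elim: N => [|N [IHE IHC]].
  split => m; rewrite leqn0 => /eqP -> P.
    by move=> R; apply: E0'; exact: M_r0.
  case=> h; rewrite CtFr_1 tweight_Node addnS eqSS succnK.
  by rewrite -(E0 cutsFr) (E0' cutsFr P h (M_r0 (fweight h))).
split.
  move=> m hm P R; case: (leqP m N) => hmN; first exact: IHE.
  have -> : m = N.+1 by lia.
  rewrite (@E_step _ N (fun l w => M w.+1 l) (fun l w => M w.-1 l)) //.
  case: R => [|r R'].
    case: P => [|t P'] //; congr (_ * _); by rewrite addn0 /= !M_1.
  congr (_ * _); rewrite M_conv.
  have -> : (tweight r).-1 + (fweight R').+1 = fweight (r :: R').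
    by rewrite fweight_cons; have := tweight_gt0 r; lia.
  case: P => [|t P']; first by rewrite add0n !M_r0.
  by rewrite /= M_pascal.
move=> m hm P r; case: (leqP m N) => hmN; first exact: IHC.
have -> : m = N.+1 by lia.
case: r => h; rewrite CtFr_S.
under eq_bigr => k _ do under eq_bigr => i _ do rewrite sumjL.
case: h => [|u V].
  rewrite big1 => [|k _]; last by rewrite big1.
  by case: P => [|t P']; rewrite /M /= ?muln0.
rewrite (@conv cutsFr N (fun l w => M w.+1 l) (fun l w => M w.-1 l) IHE IHC) M_conv.
have -> : (tweight u).-1 + (fweight V).+1 = fweight (u :: V).
  by rewrite fweight_cons; have := tweight_gt0 u; lia.
by rewrite tweight_Node succnK addnS eqSS.
Qed.



Lemma aux_comp k a0 s : ((0 < a0) && (a0 < 1 + k)) && (s == k - a0) = (a0 + s == k) && (0 < a0).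
Proof.
apply/idP/idP.
  case/andP => /andP [h1 h2] /eqP ->; rewrite h1 andbT; apply/eqP; lia.
case/andP => /eqP <- h; rewrite h /=; apply/andP; split; [lia | apply/eqP; lia].
Qed.

Lemma cnt_comps k l a : cnt (comps k l) a = (size a == l) && (sumn a == k) && all (fun x => 0 < x) a.
Proof.
elim: l k a => [|l IH] k a.
  case: k => [|k] /=.
    by rewrite /cnt big_cons big_nil addn0; case: a => [|? ?].
  by rewrite /cnt big_nil; case: a => [|? ?].
rewrite /= cnt_flatten_map.
case: a => [|a0 a'].
  by rewrite big1 // => x _; rewrite /cnt big_map big1 // => c _; rewrite consnil.
have E : forall x, cnt [seq x :: c | c <- comps (k - x) l] (a0 :: a') = (a0 == x) * cnt (comps (k - x) l) a'.
  move=> x; rewrite /cnt big_map big_distrr; apply: eq_bigr => c _ /=.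
  by rewrite eqseq_cons mulnb eq_sym.
under eq_bigr => x _ do rewrite E.
rewrite sum_pick_seq IH /= eqSS.
case: (size a' == l); rewrite ?andbF ?muln0 //= ?andbT.
case: (all _ a'); rewrite ?andbF ?muln0 ?andbT //=.
by rewrite mulnb aux_comp.
Qed.

Lemma pick2 n (c : nat -> nat -> nat -> nat) (h : nat -> nat) p w :
  \sum_(k <- iota 1 (n - 1)) \sum_(l <- iota 1 k) c n k l * (((p == l) && (w == k)) * h (n - k))
  = (((0 < w) && (w < n)) && ((0 < p) && (p <= w))) * (c n w p * h (n - w)).
Proof.
have E : forall k, \sum_(l <- iota 1 k) c n k l * (((p == l) && (w == k)) * h (n - k)) =
   (w == k) * (((0 < p) && (p < 1 + k)) * (c n k p * h (n - k))).
  move=> k; rewrite (_ : \sum_(l <- iota 1 k) _ =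
     (w == k) * \sum_(l <- iota 1 k) (p == l) * (c n k l * h (n - k))); first by rewrite sum_pick_seq.
  rewrite big_distrr; apply: eq_bigr => l _ /=.
  rewrite -mulnb; case: (p == l); case: (w == k); by rewrite ?mul0n ?mul1n ?muln0 ?muln1 // mulnC.
under eq_bigr => k _ do rewrite E.
rewrite sum_pick_seq.
have -> : ((0 < w) && (w < 1 + (n - 1))) = ((0 < w) && (w < n)).
  by apply/idP/idP; case/andP => h1 h2; rewrite h1 /=; lia.
have -> : ((0 < p) && (p < 1 + w)) = ((0 < p) && (p <= w)) by rewrite add1n ltnS.
by rewrite mulnA -mulnb !mulnb -andbA.
Qed.


Section Part_P6.
Import GRing.Theory.
Local Open Scope ring_scope.

Definition hcoef (x : hsum) (P : forest) : rat := \sum_(a <- x | a.2 == P) a.1.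

Lemma tcoefE s P R : tcoef s P R = \sum_(e <- s) (if (e.1.2 == P) && (e.2 == R) then e.1.1 else 0).
Proof. by rewrite /tcoef big_mkcond. Qed.
Lemma hcoefE x P : hcoef x P = \sum_(a <- x) (if a.2 == P then a.1 else 0).
Proof. by rewrite /hcoef big_mkcond. Qed.

Lemma tcoef_cat s1 s2 P R : tcoef (s1 ++ s2) P R = tcoef s1 P R + tcoef s2 P R.
Proof. by rewrite /tcoef big_cat. Qed.

Lemma tcoef_scale c s P R : tcoef (tscale c s) P R = c * tcoef s P R.
Proof. by rewrite !tcoefE big_map mulr_sumr; apply: eq_bigr => e _ /=; case: ifP; rewrite ?mulr0. Qed.

Lemma tcoef_tens x y P R : tcoef (tens x y) P R = hcoef x P * hcoef y R.
Proof.
rewrite tcoefE !hcoefE big_flatten big_map mulr_suml; apply: eq_bigr => a _.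
rewrite big_map mulr_sumr; apply: eq_bigr => b _ /=.
by case: (a.2 == P); case: (b.2 == R); rewrite ?mulr0 ?mul0r.
Qed.

Lemma tcoef_flatten (I : Type) (f : I -> tsum) s P R :
  tcoef (flatten (map f s)) P R = \sum_(a <- s) tcoef (f a) P R.
Proof. by rewrite /tcoef big_flatten big_map. Qed.

Lemma hcoef_hone P : hcoef hone P = (P == [::])%:R.
Proof. by rewrite hcoefE big_cons big_nil addr0 /= eq_sym; case: (_ == _). Qed.

Lemma tcoef_delta1 cuts (s : seq forest) P R :
  tcoef (delta cuts [seq (1, F) | F <- s]) P R = (\sum_(F <- s) cnt (delta_forest cuts F) (P, R))%:R.
Proof.
rewrite tcoefE big_flatten !big_map natr_sum; apply: eq_bigr => F _.
rewrite big_map /cnt natr_sum; apply: eq_bigr => p _ /=.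
by case: p => a b; rewrite xpair_eqE /=; case: (a == P); case: (b == R).
Qed.

Lemma hcoef_map1 (s : seq forest) P : hcoef [seq (1, F) | F <- s] P = (cnt s P)%:R.
Proof.
rewrite hcoefE big_map /cnt natr_sum; apply: eq_bigr => F _ /=; by case: (F == P).
Qed.

Lemma vv_map n : vv n = [seq (1, F) | F <- [seq [:: t] | t <- trees_of n]].
Proof. by rewrite /vv -map_comp. Qed.

Lemma single_inj : injective (fun t : tree => [:: t]). Proof. by move=> a b [->]. Qed.

Definition hv n (P : forest) : nat := if P is [:: t] then (tweight t == n) : nat else 0.

Lemma hcoef_vv n P : hcoef (vv n) P = (hv n P)%:R.
Proof.
rewrite vv_map hcoef_map1; congr (_%:R).
case: P => [|t [|t' P]] /=.
- by rewrite /cnt big_map big1.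
- by rewrite (cnt_map_inj _ t single_inj) cnt_trees.
- by rewrite /cnt big_map big1 // => t0 _; rewrite eqseq_cons nilcons andbF.
Qed.

Lemma hcoef_uu n P : hcoef (uu n) P = (fweight P == n : nat)%:R.
Proof. by rewrite /uu hcoef_map1 cnt_forests. Qed.

Lemma flat1 (L : seq (forest * forest)) :
  flatten [seq [:: (p.1 ++ [::], p.2 ++ [::])] | p <- L] = L.
Proof. elim: L => //= p L ->; by rewrite !cats0; case: p. Qed.

Lemma delta_single cuts t : delta_forest cuts [:: t] = tree_opts cuts t.
Proof. by rewrite /delta_forest /= flat1. Qed.

Lemma tcoef_delta_vv cuts n P R : tcoef (delta cuts (vv n)) P R = (TO cuts n (P, R))%:R.
Proof.
rewrite vv_map tcoef_delta1 big_map /TO cnt_flatten_map; congr (_%:R).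
by apply: eq_bigr => t _; rewrite delta_single.
Qed.

Lemma tcoef_delta_uu cuts n P R : tcoef (delta cuts (uu n)) P R = (Ef cuts n (P, R))%:R.
Proof. by rewrite /uu tcoef_delta1 /Ef cnt_flatten_map. Qed.

Lemma tcoef_rdelta cuts x P R : tcoef (rdelta cuts x) P R =
  tcoef (delta cuts x) P R - hcoef x P * hcoef hone R - hcoef hone P * hcoef x R.
Proof.
rewrite /rdelta !tcoef_cat /topp !tcoef_scale !tcoef_tens.
by rewrite !mulN1r addrA.
Qed.

Lemma hcoef_flatten (I : Type) (f : I -> hsum) s P :
  hcoef (flatten (map f s)) P = \sum_(a <- s) hcoef (f a) P.
Proof. by rewrite /hcoef big_flatten big_map. Qed.

Lemma hcoef_hmul_vv a0 y P : hcoef (hmul (vv a0) y) P =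
  if P is t :: P' then (tweight t == a0 : nat)%:R * hcoef y P' else 0.
Proof.
rewrite /hmul /vv -map_comp hcoef_flatten.
case: P => [|t0 P'].
  rewrite big1 // => t _; rewrite hcoefE /= big_map big1 // => b _ /=.
rewrite -cnt_trees /cnt natr_sum mulr_suml; apply: eq_bigr => t _.
rewrite hcoefE /= big_map hcoefE mulr_sumr; apply: eq_bigr => b _ /=.
rewrite eqseq_cons mul1r; case: (t == t0); case: (b.2 == P'); by rewrite ?mul1r ?mul0r.
Qed.

Lemma hcoef_hprod a P : hcoef (hprod (map vv a)) P = (map tweight P == a : nat)%:R.
Proof.
elim: a P => [|a0 a IH] P.
  by rewrite /= hcoef_hone; case: P.
rewrite (_ : hprod (map vv (a0 :: a)) = hmul (vv a0) (hprod (map vv a))) // hcoef_hmul_vv.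
case: P => [|t P'] //=; rewrite IH eqseq_cons -natrM mulnb.
by [].
Qed.

Lemma hcoef_comp_sum k l P :
  hcoef (comp_sum k l) P = ((size P == l) && (fweight P == k) : nat)%:R.
Proof.
rewrite /comp_sum hcoef_flatten.
under eq_bigr => a _ do rewrite hcoef_hprod eq_sym.
rewrite -natr_sum -/(cnt _ _) cnt_comps size_map.
have -> : all (fun x => (0 < x)%N) (map tweight P).
  by rewrite all_map; apply/allP => t _ /=; exact: tweight_gt0.
by rewrite andbT.
Qed.

Lemma tcoef_rhs c w (hw : nat -> forest -> nat) n P R
  (Hw : forall m R, hcoef (w m) R = (hw m R)%:R) :
  tcoef (rhs c w n) P R = ((\sum_(k <- iota 1 (n - 1)) \sum_(l <- iota 1 k)
      c n k l * (((size P == l) && (fweight P == k)) * hw (n - k) R))%N)%:R.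
Proof.
rewrite /rhs tcoef_flatten natr_sum; apply: eq_bigr => k _.
rewrite tcoef_flatten natr_sum; apply: eq_bigr => l _.
by rewrite tcoef_scale tcoef_tens hcoef_comp_sum Hw !natrM.
Qed.


End Part_P6.


Lemma core n a b (X Y : nat) : 0 < b -> (a + b = n -> X = Y) ->
  (a + b == n) * X = (a < n) * (Y * (b == n - a)).
Proof.
move=> hb hXY; case: (eqVneq (a + b) n) => [e|ne].
  rewrite -e hXY // (_ : a < a + b) ?addKn ?eqxx ?muln1 ?mul1n //; lia.
rewrite mul0n; case: (ltnP a n) => h //=; case: (eqVneq b (n - a)) => e; rewrite ?muln0 //.
by move: ne; rewrite e => /eqP; lia.
Qed.

Lemma M_pos s l : 0 < s -> M s l = 'C(s.-1 + l, l).
Proof. by case: s. Qed.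

Lemma bin_PRv n wP tr l : 0 < tr -> wP + tr = n -> M (tr.*2.-1) l = 'C(2 * n - 2 * wP + l - 2, l).
Proof.
move=> htr e; rewrite M_pos; last by rewrite -mul2n; lia.
congr 'C(_, _); rewrite -mul2n; lia.
Qed.

Lemma bin_Frv n wP tr l : 0 < tr -> 0 < l -> wP + tr = n -> M (tr.-1) l = 'C(n - wP + l - 2, l).
Proof.
move=> htr hl e; case: tr htr e => // [[|tr]] _ e.
  rewrite /M /=; case: l hl => // l _; rewrite bin_small //; lia.
rewrite M_pos //; congr 'C(_, _); lia.
Qed.

Lemma bin_PRu n wP wR l : wP + wR = n -> M (wR.*2.+1) l = 'C(2 * n - 2 * wP + l, l).
Proof. move=> e; rewrite M_pos //; congr 'C(_, _); rewrite -mul2n; lia. Qed.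

Lemma bin_Fru n wP wR l : wP + wR = n -> M (wR.+1) l = 'C(n - wP + l, l).
Proof. move=> e; rewrite M_pos //; congr 'C(_, _); lia. Qed.

Lemma fweight_pos t P : 0 < fweight (t :: P).
Proof. by rewrite fweight_cons addn_gt0 tweight_gt0. Qed.

Lemma key_v cuts n c (G : nat -> nat -> nat)
  (HC : forall P r, Ct cuts n (P, r) = (fweight P + tweight r == n) * G (size P) (tweight r))
  (G0 : forall w, G 0 w = 1)
  (Hc : forall wP tr l, 0 < tr -> 0 < l -> wP + tr = n -> G l tr = c n wP l)
  P R :
  TO cuts n (P, R) = hv n P * (R == [::]) + (P == [::]) * hv n R +
   (((0 < fweight P) && (fweight P < n)) && ((0 < size P) && (size P <= fweight P))) *
     (c n (fweight P) (size P) * hv (n - fweight P) R).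
Proof.
rewrite TO_eq; case: P => [|t P'].
  case: R => [|r [|r' R]]; rewrite /= ?mul0n ?addn0 //.
  by rewrite !add0n mul1n HC G0 muln1 /= add0n.
have h1 := fweight_pos t P'.
have h3 := size_le_fweight (t :: P').
rewrite h1 h3 /= andbT addn0.
case: R => [|r [|r' R]].
- by case: P' h1 h3 => [|t' P'] h1 h3 /=; rewrite ?muln0 ?addn0 ?mul1n ?muln1 // mulnC.
- rewrite HC.
  have -> : (if P' is [::] then ([:: r] == [::]) * (tweight t == n) else 0) = 0 by case: P' h1 h3 => [|? ?] //= *; rewrite ?consnil ?muln0 ?mul0n.
  have -> : (if P' is [::] then tweight t == n else 0) * ([:: r] == [::]) = 0 by case: P' h1 h3 => [|? ?] //= *; rewrite ?consnil ?muln0 ?mul0n.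
  rewrite !add0n /=.
  apply: core; first exact: tweight_gt0.
  by move=> e; apply: Hc => //; exact: tweight_gt0.
- have -> : (if P' is [::] then ((r :: r' :: R) == [::]) * (tweight t == n) else 0) = 0 by case: P' h1 h3 => [|? ?] //= *; rewrite ?consnil ?muln0 ?mul0n.
  have -> : (if P' is [::] then tweight t == n else 0) * ((r :: r' :: R) == [::]) = 0 by case: P' h1 h3 => [|? ?] //= *; rewrite ?consnil ?muln0 ?mul0n.
  by rewrite /= !muln0.
Qed.

Lemma key_u cuts n c (F : nat -> nat -> nat)
  (HE : forall P R, Ef cuts n (P, R) = (fweight P + fweight R == n) * F (size P) (fweight R))
  (F0 : forall w, F 0 w = 1) (F1 : forall l, F l 0 = 1)
  (Hc : forall wP wR l, 0 < wR -> 0 < l -> wP + wR = n -> F l wR = c n wP l)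
  (hn : 0 < n) P R :
  Ef cuts n (P, R) = (fweight P == n) * (R == [::]) + (P == [::]) * (fweight R == n) +
   (((0 < fweight P) && (fweight P < n)) && ((0 < size P) && (size P <= fweight P))) *
     (c n (fweight P) (size P) * (fweight R == n - fweight P)).
Proof.
rewrite HE; case: P => [|t P'].
  rewrite /= add0n F0 muln1 mul0n addn0 mul1n.
  by have -> : (0 == n) = false by apply/eqP; lia.
have h1 := fweight_pos t P'.
have h3 := size_le_fweight (t :: P').
rewrite h1 h3 /= andbT mul0n addn0.
set wP := fweight (t :: P').
case: R => [|r R].
  rewrite /= addn0 F1 !muln1.
  case: (ltnP wP n) => h /=; last by rewrite mul0n addn0.
  have -> : (0 == n - wP) = false by apply/eqP; lia.
  by rewrite !muln0 addn0.
rewrite consnil muln0 add0n; apply: core; first exact: fweight_pos.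
by move=> e; apply: Hc => //; exact: fweight_pos.
Qed.


Import GRing.Theory.

Lemma main1 n : (1 <= n)%N -> teq (rdelta cutsPR (vv n))
          (rhs (fun n k l => 'C(2 * n - 2 * k + l - 2, l)) vv n).
Proof.
move=> hn P R.
rewrite tcoef_rdelta tcoef_delta_vv !hcoef_vv !hcoef_hone (tcoef_rhs _ _ _ _ hcoef_vv).
rewrite (pick2 n (fun n k l => 'C(2 * n - 2 * k + l - 2, l)) (fun m => hv m R)).
have HC : forall Q r, Ct cutsPR n (Q, r) =
   (fweight Q + tweight r == n) * (fun l w => M w.*2.-1 l) (size Q) (tweight r).
  by move=> Q r; exact: CtPR_all.
have G0 : forall w, (fun l w => M w.*2.-1 l) 0 w = 1 by move=> w; exact: M_r0.
have Hc : forall wP tr l, 0 < tr -> 0 < l -> wP + tr = n ->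
   (fun l w => M w.*2.-1 l) l tr = (fun n k l => 'C(2 * n - 2 * k + l - 2, l)) n wP l.
  by move=> wP tr l htr _ e; exact: bin_PRv.
rewrite (@key_v cutsPR n (fun n k l => 'C(2 * n - 2 * k + l - 2, l)) (fun l w => M w.*2.-1 l) HC G0 Hc) !natrD !natrM.
ring.
Qed.

Lemma main2 n : (1 <= n)%N -> teq (rdelta cutsFr (vv n))
          (rhs (fun n k l => 'C(n - k + l - 2, l)) vv n).
Proof.
move=> hn P R.
rewrite tcoef_rdelta tcoef_delta_vv !hcoef_vv !hcoef_hone (tcoef_rhs _ _ _ _ hcoef_vv).
rewrite (pick2 n (fun n k l => 'C(n - k + l - 2, l)) (fun m => hv m R)).
have HC : forall Q r, Ct cutsFr n (Q, r) =
   (fweight Q + tweight r == n) * (fun l w => M w.-1 l) (size Q) (tweight r).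
  by move=> Q r; have := (Fr_all n).2 n.-1 (leq_pred n) Q r; rewrite prednK.
have G0 : forall w, (fun l w => M w.-1 l) 0 w = 1 by move=> w; exact: M_r0.
have Hc : forall wP tr l, 0 < tr -> 0 < l -> wP + tr = n ->
   (fun l w => M w.-1 l) l tr = (fun n k l => 'C(n - k + l - 2, l)) n wP l.
  by move=> wP tr l htr hl e; exact: bin_Frv.
rewrite (@key_v cutsFr n (fun n k l => 'C(n - k + l - 2, l)) (fun l w => M w.-1 l) HC G0 Hc) !natrD !natrM.
ring.
Qed.

Lemma main3 n : (1 <= n)%N -> teq (rdelta cutsPR (uu n))
          (rhs (fun n k l => 'C(2 * n - 2 * k + l, l)) uu n).
Proof.
move=> hn P R.
rewrite tcoef_rdelta tcoef_delta_uu !hcoef_uu !hcoef_hone (tcoef_rhs _ _ _ _ hcoef_uu).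
rewrite (pick2 n (fun n k l => 'C(2 * n - 2 * k + l, l)) (fun m => (fweight R == m : nat))).
have HE : forall Q S, Ef cutsPR n (Q, S) =
   (fweight Q + fweight S == n) * (fun l w => M w.*2.+1 l) (size Q) (fweight S).
  by move=> Q S; exact: EPR_all.
have F0 : forall w, (fun l w => M w.*2.+1 l) 0 w = 1 by move=> w; exact: M_r0.
have F1 : forall l, (fun l w => M w.*2.+1 l) l 0 = 1 by move=> l; exact: M_1.
have Hc : forall wP wR l, 0 < wR -> 0 < l -> wP + wR = n ->
   (fun l w => M w.*2.+1 l) l wR = (fun n k l => 'C(2 * n - 2 * k + l, l)) n wP l.
  by move=> wP wR l _ _ e; exact: bin_PRu.
rewrite (@key_u cutsPR n (fun n k l => 'C(2 * n - 2 * k + l, l)) (fun l w => M w.*2.+1 l) HE F0 F1 Hc hn) !natrD !natrM.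
ring.
Qed.

Lemma main4 n : (1 <= n)%N -> teq (rdelta cutsFr (uu n))
          (rhs (fun n k l => 'C(n - k + l, l)) uu n).
Proof.
move=> hn P R.
rewrite tcoef_rdelta tcoef_delta_uu !hcoef_uu !hcoef_hone (tcoef_rhs _ _ _ _ hcoef_uu).
rewrite (pick2 n (fun n k l => 'C(n - k + l, l)) (fun m => (fweight R == m : nat))).
have HE : forall Q S, Ef cutsFr n (Q, S) =
   (fweight Q + fweight S == n) * (fun l w => M w.+1 l) (size Q) (fweight S).
  by move=> Q S; exact: (Fr_all n).1.
have F0 : forall w, (fun l w => M w.+1 l) 0 w = 1 by move=> w; exact: M_r0.
have F1 : forall l, (fun l w => M w.+1 l) l 0 = 1 by move=> l; exact: M_1.
have Hc : forall wP wR l, 0 < wR -> 0 < l -> wP + wR = n ->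
   (fun l w => M w.+1 l) l wR = (fun n k l => 'C(n - k + l, l)) n wP l.
  by move=> wP wR l _ _ e; exact: bin_Fru.
rewrite (@key_u cutsFr n (fun n k l => 'C(n - k + l, l)) (fun l w => M w.+1 l) HE F0 F1 Hc hn) !natrD !natrM.
ring.
Qed.


Unset Implicit Arguments.

Theorem mainTheorem9 (n : nat) : (1 <= n)%N ->
  [/\ teq (rdelta cutsPR (vv n))
          (rhs (fun n k l => 'C(2 * n - 2 * k + l - 2, l)) vv n),
      teq (rdelta cutsFr (vv n))
          (rhs (fun n k l => 'C(n - k + l - 2, l)) vv n),
      teq (rdelta cutsPR (uu n))
          (rhs (fun n k l => 'C(2 * n - 2 * k + l, l)) uu n)
    & teq (rdelta cutsFr (uu n))
          (rhs (fun n k l => 'C(n - k + l, l)) uu n)].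
Proof.
move=> hn; split; [exact: main1 | exact: main2 | exact: main3 | exact: main4].
Qed.
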